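(* Let $G$ be an input tree and $H$ a TLRG with $G\Rightarrow^*_{\{r_0,r_1,r_2\}}H$. Then either $|V_H|=1$ or $H$ is not in normal form (i.e. some rule among $r_0,r_1,r_2$ is applicable to $H$).
   Context: Graphs over a label alphabet $(\mathcal L_V,\mathcal L_E)$ are tuples $G=(V,E,s,t,l,m,p)$ with $V,E$ finite, $s,t:E\to V$ total, $l:V\rightharpoonup\mathcal L_V$ partial, $m:E\to\mathcal L_E$ total, $p:V\rightharpoonup\{0,1\}$ partial (rootedness; root nodes are $p^{-1}(\{1\})$). TLRG = $l,p$ total. Morphisms preserve sources, targets, edge labels, and node labels and rootedness wherever defined. A rule $\langle L\leftarrow K\rightarrow R\rangle$ has TLRGs $L,R$ and a common subgraph $K$ (sets included, $s,t,m$ restricted, $l_K\subseteq l_L$, $p_K\subseteq p_L$, likewise for $R$). It is applied to TLRG $G$ via an injective morphism $g:L\to G$ satisfying the dangling condition (no edge outside $g(L)$ incident to a node of $g(V_L\setminus V_K)$) by deleting images of items of $L$ not in $K$ and undefining label/rootedness of $g_V(v)$ where undefined for $v\in V_K$, then adding disjointly the items of $R$ not in $K$ and setting label/rootedness of $g_V(v)$ to $l_R(v)/p_R(v)$ where undefined in $K$; $G\Rightarrow H$ when $H$ is isomorphic to the result; $\Rightarrow^*$ its reflexive-transitive closure. $\mathcal L=(\{\square,\triangle\},\{\square\})$; all edges labelled $\square$. Rule $r_0$: $L$ has an unrooted node $1$ labelled $\square$, a rooted node $2$ labelled $\square$, edge $1\to2$; $K$ is node $1$ with undefined label and rootedness;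 $R$ is node $1$ rooted labelled $\square$. Rule $r_1$: as $r_0$ but node $1$ of $L$ labelled $\triangle$. Rule $r_2$: $L$ has rooted node $1$ labelled $\square$, unrooted node $2$ labelled $\square$, edge $1\to2$; $K$ is nodes $1,2$ with undefined labels and rootedness, no edges; $R$ has node $1$ unrooted labelled $\triangle$, node $2$ rooted labelled $\square$, edge $1\to2$. An input graph is a TLRG over $\mathcal L$ with exactly one root node in which every node and edge is labelled $\square$. A tree is a non-empty graph whose underlying undirected multigraph is connected and has no undirected cycles (including loops and parallel edges), and in which every node has at most one incoming edge. An input tree is an input graph that is a tree. *)

(* Defs.v *)
(* Node and edge identifiers are natural numbers; a graph is given by
   finite (duplicate-free) lists of node ids and edge ids, together with
   total functions s, t, m (only meaningful on the edge list) and
   partial functions l, p (option-valued, only meaningful on nodes). *)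
From mathcomp Require Import all_boot.
Set Implicit Arguments. Unset Strict Implicit. Unset Printing Implicit Defensive.

Section Graphs.
Variables (LV LE : Type).

Record graph := Graph {
  gV : seq nat; gE : seq nat;
  gs : nat -> nat; gt : nat -> nat;
  gl : nat -> option LV;
  gm : nat -> LE;
  gp : nat -> option bool     (* partial rootedness: Some true = 1 = rooted *)
}.

Definition is_graph (G : graph) : Prop :=
  [/\ uniq (gV G), uniq (gE G) &
      forall e, e \in gE G -> gs G e \in gV G /\ gt G e \in gV G].

Definition is_tlrg (G : graph) : Prop :=
  is_graph G /\ forall v, v \in gV G -> gl G v <> None /\ gp G v <> None.

Definition is_morphism (L G : graph) (fv fe : nat -> nat) : Prop :=
  [/\ forall v, v \in gV L -> fv v \in gV G,
      forall e, e \in gE L ->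
        [/\ fe e \in gE G, gs G (fe e) = fv (gs L e),
            gt G (fe e) = fv (gt L e) & gm G (fe e) = gm L e],
      forall v a, v \in gV L -> gl L v = Some a -> gl G (fv v) = Some a &
      forall v b, v \in gV L -> gp L v = Some b -> gp G (fv v) = Some b].

Definition is_injective_morphism (L G : graph) (fv fe : nat -> nat) : Prop :=
  [/\ is_morphism L G fv fe, {in gV L &, injective fv} & {in gE L &, injective fe}].

Definition iso (G H : graph) : Prop :=
  exists (fv fe : nat -> nat),
  [/\ {in gV G &, injective fv} /\ {in gE G &, injective fe},
      (forall v, v \in gV G -> fv v \in gV H) /\
      (forall w, w \in gV H -> exists2 v, v \in gV G & fv v = w),
      (forall e, e \in gE G -> fe e \in gE H) /\
      (forall f, f \in gE H -> exists2 e, e \in gE G & fe e = f),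
      (forall e, e \in gE G ->
         [/\ gs H (fe e) = fv (gs G e), gt H (fe e) = fv (gt G e)
           & gm H (fe e) = gm G e]) &
      (forall v, v \in gV G -> gl H (fv v) = gl G v /\ gp H (fv v) = gp G v)].

Definition subgraph (K L : graph) : Prop :=
  [/\ is_graph K, {subset gV K <= gV L}, {subset gE K <= gE L},
      forall e, e \in gE K ->
        [/\ gs K e = gs L e, gt K e = gt L e & gm K e = gm L e] &
      (forall v a, v \in gV K -> gl K v = Some a -> gl L v = Some a) /\
      (forall v b, v \in gV K -> gp K v = Some b -> gp L v = Some b)].

Record rule := Rule { rL : graph; rK : graph; rR : graph }.

Definition is_rule (r : rule) : Prop :=
  [/\ is_tlrg (rL r), is_tlrg (rR r), subgraph (rK r) (rL r) & subgraph (rK r) (rR r)].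

Definition dangling (r : rule) (G : graph) (fv fe : nat -> nat) : Prop :=
  forall e, e \in gE G -> ~ (exists2 e', e' \in gE (rL r) & fe e' = e) ->
  forall v, v \in gV (rL r) -> v \notin gV (rK r) ->
    gs G e <> fv v /\ gt G e <> fv v.

Definition is_match (r : rule) (G : graph) (fv fe : nat -> nat) : Prop :=
  is_injective_morphism (rL r) G fv fe /\ dangling r G fv fe.

(* The result of applying r to G via (fv, fe): delete, relabel, then add
   the items of R not in K disjointly, using the fresh ids NV + v, NE + e. *)
Section Apply.
Variables (r : rule) (G : graph) (fv fe : nat -> nat).

Definition NV := (foldr maxn 0 (gV G)).+1.
Definition NE := (foldr maxn 0 (gE G)).+1.

Definition del_nodes := [seq fv v | v <- gV (rL r) & v \notin gV (rK r)].
Definition del_edges := [seq fe e | e <- gE (rL r) & e \notin gE (rK r)].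

Definition rnode (v : nat) : nat := if v \in gV (rK r) then fv v else NV + v.

Definition kpre (v : nat) : seq nat := [seq k <- gV (rK r) | fv k == v].

Definition res_l (v : nat) : option LV :=
  if v < NV then
    match kpre v with
    | k :: _ => match gl (rK r) k with Some _ => gl G v | None => gl (rR r) k end
    | [::] => gl G v
    end
  else gl (rR r) (v - NV).

Definition res_p (v : nat) : option bool :=
  if v < NV then
    match kpre v with
    | k :: _ => match gp (rK r) k with Some _ => gp G v | None => gp (rR r) k end
    | [::] => gp G v
    end
  else gp (rR r) (v - NV).

Definition apply_rule : graph :=
  Graph
    ([seq v <- gV G | v \notin del_nodes] ++
       [seq NV + v | v <- gV (rR r) & v \notin gV (rK r)])
    ([seq e <- gE G | e \notin del_edges] ++
       [seq NE + e | e <- gE (rR r) & e \notin gE (rK r)])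
    (fun e => if e < NE then gs G e else rnode (gs (rR r) (e - NE)))
    (fun e => if e < NE then gt G e else rnode (gt (rR r) (e - NE)))
    res_l
    (fun e => if e < NE then gm G e else gm (rR r) (e - NE))
    res_p.
End Apply.

Definition dderives (rules : rule -> Prop) (G H : graph) : Prop :=
  exists r fv fe, [/\ rules r, is_tlrg G, is_match r G fv fe, is_graph H
                    & iso (apply_rule r G fv fe) H].

Inductive derives (rules : rule -> Prop) : graph -> graph -> Prop :=
| derives_refl G : derives rules G G
| derives_step G H K : dderives rules G H -> derives rules H K -> derives rules G K.

Definition applicable (rules : rule -> Prop) (H : graph) : Prop :=
  exists r fv fe, rules r /\ is_match r H fv fe.

Definition connects (G : graph) (e u w : nat) : Prop :=
  (gs G e = u /\ gt G e = w) \/ (gs G e = w /\ gt G e = u).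

Inductive uconnected (G : graph) : nat -> nat -> Prop :=
| ucon_refl u : uconnected G u u
| ucon_step u w x e : e \in gE G -> connects G e u w -> uconnected G w x ->
                      uconnected G u x.

(* an undirected cycle v_0 e_0 v_1 ... v_{n-1} e_{n-1} v_0, n >= 1, with
   pairwise distinct edges and pairwise distinct nodes (n = 1: loop,
   n = 2: parallel edges) *)
Definition ucycle (G : graph) (vs es : seq nat) : Prop :=
  [/\ 0 < size es, size vs = size es, uniq es /\ uniq vs,
      {subset es <= gE G} /\ {subset vs <= gV G} &
      forall i, i < size es ->
        connects G (nth 0 es i) (nth 0 vs i) (nth 0 vs (i.+1 %% size es))].

Definition is_tree (G : graph) : Prop :=
  [/\ 0 < size (gV G),
      (forall u w, u \in gV G -> w \in gV G -> uconnected G u w),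
      (forall vs es, ~ ucycle G vs es) &
      forall v, v \in gV G -> count (fun e => gt G e == v) (gE G) <= 1].

End Graphs.

(* The concrete label alphabet ({□, △}, {□}) *)
Inductive vlab := Sq | Tri.
Inductive elab := ESq.

Definition Gr := graph vlab elab.

Definition input_graph (G : Gr) : Prop :=
  [/\ is_tlrg G, count (fun v => gp G v == Some true) (gV G) = 1,
      (forall v, v \in gV G -> gl G v = Some Sq) &
      (forall e, e \in gE G -> gm G e = ESq)].

Definition input_tree (G : Gr) : Prop := input_graph G /\ is_tree G.

Definition L01 (a : vlab) : Gr :=
  Graph [:: 1; 2] [:: 1] (fun _ => 1) (fun _ => 2)
        (fun v => if v == 1 then Some a else Some Sq) (fun _ => ESq)
        (fun v => if v == 1 then Some false else Some true).
Definition K01 : Gr :=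
  Graph [:: 1] [::] (fun _ => 1) (fun _ => 1) (fun _ => None) (fun _ => ESq)
        (fun _ => None).
Definition R01 : Gr :=
  Graph [:: 1] [::] (fun _ => 1) (fun _ => 1) (fun _ => Some Sq) (fun _ => ESq)
        (fun _ => Some true).
Definition r0 : rule vlab elab := Rule (L01 Sq) K01 R01.
Definition r1 : rule vlab elab := Rule (L01 Tri) K01 R01.

Definition L2 : Gr :=
  Graph [:: 1; 2] [:: 1] (fun _ => 1) (fun _ => 2)
        (fun _ => Some Sq) (fun _ => ESq)
        (fun v => if v == 1 then Some true else Some false).
Definition K2 : Gr :=
  Graph [:: 1; 2] [::] (fun _ => 1) (fun _ => 2) (fun _ => None) (fun _ => ESq)
        (fun _ => None).
Definition R2 : Gr :=
  Graph [:: 1; 2] [:: 1] (fun _ => 1) (fun _ => 2)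
        (fun v => if v == 1 then Some Tri else Some Sq) (fun _ => ESq)
        (fun v => if v == 1 then Some false else Some true).
Definition r2 : rule vlab elab := Rule L2 K2 R2.

Definition rules012 (r : rule vlab elab) : Prop := r = r0 \/ r = r1 \/ r = r2.

(* Main.v *)
Require Import Defs.
From mathcomp Require Import all_boot zify.
Set Implicit Arguments. Unset Strict Implicit. Unset Printing Implicit Defensive.

Definition Inv (G : Gr) : Prop :=
 [/\ (forall e, e \in gE G -> gs G e \in gV G /\ gt G e \in gV G),
     (forall u w, u \in gV G -> w \in gV G -> uconnected G u w),
     (forall e1 e2, e1 \in gE G -> e2 \in gE G -> gt G e1 = gt G e2 -> e1 = e2) &
     exists rho, [/\ rho \in gV G, gp G rho = Some true, gl G rho = Some Sq,
        (forall v, v \in gV G -> gp G v = Some true -> v = rho) &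
        exists h : nat -> nat,
          [/\ (forall e, e \in gE G -> h (gt G e) = (h (gs G e)).+1),
           (forall v, v \in gV G -> gl G v = Some Tri -> h v < h rho) &
           (forall v, v \in gV G -> gl G v = Some Tri ->
              exists2 e, e \in gE G & gs G e = v /\
                 (gl G (gt G e) = Some Tri \/ gt G e = rho))]]].

Lemma match01 (H : Gr) (a : vlab) p rho e :
  p \in gV H -> rho \in gV H -> e \in gE H -> gs H e = p -> gt H e = rho ->
  gl H p = Some a -> gp H p = Some false -> gl H rho = Some Sq -> gp H rho = Some true ->
  (forall e', e' \in gE H -> e' != e -> gs H e' <> rho /\ gt H e' <> rho) ->
  is_match (Rule (L01 a) K01 R01) H (fun v => if v == 1 then p else rho) (fun _ => e).
Proof.
move=> pV rV eE se te pl pp rl rp dg.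
have prho : p != rho by apply/eqP=> E; move: pp; rewrite E rp.
split; first split; first split.
- by move=> v; rewrite /= !inE => /orP[]/eqP-> /=.
- by move=> e' _ /=; split=> //; case: (gm H e).
- by move=> v b; rewrite /= !inE => /orP[]/eqP-> /= [<-].
- by move=> v b; rewrite /= !inE => /orP[]/eqP-> /= [<-].
- move=> x y; rewrite /= !inE => /orP[]/eqP-> /orP[]/eqP-> //= E.
  + by move: prho; rewrite E eqxx.
  + by move: prho; rewrite E eqxx.
- by move=> x y; rewrite /= !inE => /eqP-> /eqP->.
- move=> e' e'E ne v; rewrite /= !inE => /orP[]/eqP-> //= _.
  apply: dg => //; apply/eqP => E; apply: ne; exists 1 => //; rewrite inE.
Qed.

Lemma final (H : Gr) : is_tlrg H -> Inv H -> size (gV H) = 1 \/ applicable rules012 H.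
Proof.
move=> [[uV uE endp] tot] [_ conn indeg [rho [rhoV rhop rhol runiq [h [ha hb hc]]]]].
case: (boolP (has (fun e => gs H e == rho) (gE H))) => [/hasP [e eE /eqP se]|nos].
  right. set c := gt H e.
  have cV : c \in gV H by case: (endp e eE).
  have hc' : h c = (h rho).+1 by rewrite /c ha // se.
  have crho : c != rho by apply/eqP => E; rewrite E in hc'; lia.
  have cl : gl H c = Some Sq.
    case: (tot c cV) => + _; case E: (gl H c) => [[]|] // _.
    by move: (hb c cV E); lia.
  have cp : gp H c = Some false.
    case: (tot c cV) => _; case E: (gp H c) => [[]|] // _.
    by move: crho; rewrite (runiq c cV E) eqxx.
  exists r2, (fun v => if v == 1 then rho else c), (fun _ => e).
  split; first by right; right.
  split; first split; first split.
  - by move=> v; rewrite /= !inE => /orP[]/eqP-> /=.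
  - by move=> e' _ /=; split=> //; case: (gm H e).
  - by move=> v b; rewrite /= !inE => /orP[]/eqP-> /= [<-].
  - by move=> v b; rewrite /= !inE => /orP[]/eqP-> /= [<-].
  - move=> x y; rewrite /= !inE => /orP[]/eqP-> /orP[]/eqP-> //= E.
    + by move: crho; rewrite E eqxx.
    + by move: crho; rewrite E eqxx.
  - by move=> x y; rewrite /= !inE => /eqP-> /eqP->.
  - by move=> e' _ _ v; rewrite /= !inE => ->.
case: (boolP (has (fun e => gt H e == rho) (gE H))) => [/hasP [e eE /eqP te]|not].
  right. set p := gs H e.
  have pV : p \in gV H by case: (endp e eE).
  have prho : p != rho.
    by apply/eqP => E; move/negP: nos; apply; apply/hasP; exists e => //; apply/eqP.
  have pp : gp H p = Some false.
    case: (tot p pV) => _; case E: (gp H p) => [[]|] // _.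
    by move: prho; rewrite (runiq p pV E) eqxx.
  have dg : forall e', e' \in gE H -> e' != e -> gs H e' <> rho /\ gt H e' <> rho.
    move=> e' e'E ne; split => E.
      by move/negP: nos; apply; apply/hasP; exists e'; rewrite // E.
    by move/eqP: ne; apply; apply: indeg => //; rewrite E.
  case: (tot p pV) => + _; case El: (gl H p) => [[]|] // _.
    exists r0, (fun v => if v == 1 then p else rho), (fun _ => e).
    by split; [left | apply: match01].
  exists r1, (fun v => if v == 1 then p else rho), (fun _ => e).
  by split; [right; left | apply: match01].
left.
have all1 : {subset gV H <= [:: rho]}.
  move=> w wV; rewrite inE; have U := conn rho w rhoV wV.
  inversion U as [|u x y e' e'E C]; first by [].
  case: C => [[s1 _]|[_ t1]].
    by move/negP: nos; case; apply/hasP; exists e'; rewrite // s1.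
  by move/negP: not; case; apply/hasP; exists e'; rewrite // t1.
have := uniq_leq_size uV all1; have : 0 < size (gV H) by case: (gV H) rhoV.
rewrite /=; lia.
Qed.

Lemma ucon_map (A H : Gr) fv fe u w :
  (forall e, e \in gE A -> fe e \in gE H) ->
  (forall e, e \in gE A -> gs H (fe e) = fv (gs A e) /\ gt H (fe e) = fv (gt A e)) ->
  uconnected A u w -> uconnected H (fv u) (fv w).
Proof.
move=> mE st; elim=> [x|x y z e eE C _ IH]; first exact: ucon_refl.
apply: (ucon_step (w := fv y) (e := fe e)) => //; first exact: mE.
rewrite /connects; case: (st e eE) => -> ->; case: C => [[-> ->]|[-> ->]]; [left|right]; done.
Qed.

Lemma inv_iso (A H : Gr) : Inv A -> iso A H -> Inv H.
Proof.
move=> [endp conn indeg [rho [rV rp rl runiq [h [ha hb hc]]]]].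
move=> [fv [fe [[injV injE] [mV sV] [mE sE] est lab]]].
have st : forall e, e \in gE A -> gs H (fe e) = fv (gs A e) /\ gt H (fe e) = fv (gt A e).
  by move=> e eE; case: (est e eE).
pose iv w := nth 0 (gV A) (index w (map fv (gV A))).
have ivK : forall w, w \in gV H -> iv w \in gV A /\ fv (iv w) = w.
  move=> w /sV [v vV <-].
  have im : fv v \in map fv (gV A) by apply: map_f.
  have lt : index (fv v) (map fv (gV A)) < size (gV A) by rewrite -(size_map fv) index_mem.
  split; first exact: mem_nth.
  by rewrite /iv -(nth_map 0 (fv 0)) // nth_index.
have ivfv : forall v, v \in gV A -> iv (fv v) = v.
  move=> v vV; case: (ivK (fv v) (mV v vV)) => ivV E; exact: injV.
split.
- move=> f /sE [a aE <-]; case: (st a aE) => -> ->; case: (endp a aE) => ??; split; exact: mV.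
- move=> u w /sV [u' u'V <-] /sV [w' w'V <-]; apply: (ucon_map mE st); exact: conn.
- move=> f1 f2 /sE [a1 a1E <-] /sE [a2 a2E <-]; case: (st a1 a1E) => _ ->; case: (st a2 a2E) => _ -> E.
  congr fe; apply: indeg => //; apply: injV => //.
    by case: (endp a1 a1E). by case: (endp a2 a2E).
exists (fv rho); split.
- exact: mV.
- by case: (lab rho rV) => _ ->.
- by case: (lab rho rV) => ->.
- move=> w /sV [v vV <-]; case: (lab v vV) => _ -> /(runiq v vV) ->; done.
exists (fun w => h (iv w)); split.
- move=> f /sE [a aE <-]; case: (st a aE) => -> ->; case: (endp a aE) => sa ta.
  by rewrite !ivfv //; apply: ha.
- move=> w /sV [v vV <-]; case: (lab v vV) => -> _ /(hb v vV); rewrite !ivfv //.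
- move=> w /sV [v vV <-]; case: (lab v vV) => -> _ /(hc v vV) [a aE [sa ta]].
  exists (fe a); first exact: mE.
  case: (st a aE) => -> ->; rewrite sa; split => //.
  case: ta => [ta|->]; [left|by right].
  by case: (lab (gt A a)) => [|->//]; case: (endp a aE).
Qed.

Section Heights.
Variable G : Gr.
Hypothesis endp : forall e, e \in gE G -> gs G e \in gV G /\ gt G e \in gV G.
Hypothesis indeg : forall e1 e2, e1 \in gE G -> e2 \in gE G -> gt G e1 = gt G e2 -> e1 = e2.
Hypothesis nocyc : forall vs es, ~ Defs.ucycle G vs es.

Definition hasp v := has (fun e => gt G e == v) (gE G).
Definition pe v := nth 0 (gE G) (find (fun e => gt G e == v) (gE G)).
Definition par v := gs G (pe v).
Fixpoint depth n v := if n is n'.+1 then (if hasp v then (depth n' (par v)).+1 else 0) else 0.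

Lemma pe_prop v : hasp v -> pe v \in gE G /\ gt G (pe v) = v.
Proof.
move=> hv; split; first by rewrite /pe mem_nth // -has_find.
by apply/eqP; apply: (nth_find 0 hv).
Qed.

Lemma pe_edge e : e \in gE G -> pe (gt G e) = e.
Proof.
move=> eE; have hv : hasp (gt G e) by apply/hasP; exists e.
by case: (pe_prop hv) => pE pt; apply: indeg.
Qed.

Lemma par_in v : hasp v -> par v \in gV G.
Proof. by move=> hv; case: (pe_prop hv) => pE _; case: (endp pE). Qed.

Lemma iter_in v m : v \in gV G -> (forall k, k < m -> hasp (iter k par v)) -> iter m par v \in gV G.
Proof.
move=> vV; elim: m => [|m IH] H //=; apply: par_in; apply: H; done.
Qed.

Lemma depth_stable m : forall n v, ~~ hasp (iter m par v) -> m <= n -> depth n v = depth m v.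
Proof.
elim: m => [|m IH] [|n] v hv lmn //=.
- by case: (hasp v) hv.
- by rewrite iterSr in hv; rewrite IH.
Qed.

Lemma cyc d y : 0 < d -> y \in gV G -> iter d par y = y ->
  (forall k, k < d -> hasp (iter k par y)) -> False.
Proof.
elim: d {-2}d (leqnn d) y => [|n IH] d led y d0 yV cy hp; first by lia.
set vs := mkseq (fun k => iter k par y) d.
have memvs : forall x, x \in vs -> exists2 k, k < d & x = iter k par y.
  by move=> x /mapP [k]; rewrite mem_iota => /andP [_ kd] ->; exists k.
case: (boolP (uniq vs)) => [uvs|/(uniqPn 0) [i [j [lij ljs E]]]].
  apply: (nocyc (vs := vs) (es := map pe vs)).
  have svs : size vs = d by rewrite size_mkseq.
  split.
  - by rewrite size_map svs.
  - by rewrite size_map.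
  - split => //; rewrite map_inj_in_uniq //.
    move=> a b /memvs [ka kad ->] /memvs [kb kbd ->] E.
    case: (pe_prop (hp _ kad)) => _ <-; case: (pe_prop (hp _ kbd)) => _ <-.
    by rewrite E.
  - split.
      move=> e /mapP [x /memvs [k kd ->] ->]; by case: (pe_prop (hp _ kd)).
    move=> x /memvs [k kd ->]; apply: iter_in => // i id; apply: hp; lia.
  - rewrite size_map svs => i id; rewrite (nth_map 0) ?svs //.
    rewrite !nth_mkseq ?ltn_pmod //; right; split; last by case: (pe_prop (hp _ id)).
    rewrite -/(par _) -iterS.
    case: (ltnP i.+1 d) => h1; first by rewrite modn_small.
    have -> : i.+1 = d by lia.
    by rewrite modnn /= cy.
rewrite size_mkseq in ljs; rewrite !nth_mkseq in E; try lia.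
apply: (IH (j - i) _ (iter i par y)).
- lia.
- lia.
- apply: iter_in => // k kd; apply: hp; lia.
- by rewrite -iterD subnK ?E //; lia.
- move=> k kd; rewrite -iterD; apply: hp; lia.
Qed.

Lemma term v : v \in gV G -> exists2 m, m <= size (gV G) & ~~ hasp (iter m par v).
Proof.
move=> vV; case: (boolP [exists k : 'I_(size (gV G)).+1, ~~ hasp (iter k par v)]).
  by case/existsP => k hk; exists k => //; rewrite -ltnS.
move=> /existsPn H.
have hp : forall k, k <= size (gV G) -> hasp (iter k par v).
  by move=> k kl; have := H (Ordinal (n:=(size (gV G)).+1) (m:=k) kl); rewrite negbK.
set s := mkseq (fun k => iter k par v) (size (gV G)).+1.
have : ~~ uniq s.
  apply/negP => us; have := uniq_leq_size us.
  have sub : {subset s <= gV G}.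
    move=> x /mapP [k]; rewrite mem_iota => /andP [_ kd] ->.
    apply: iter_in => // i ik; apply: hp; lia.
  by move/(_ _ sub); rewrite /s size_mkseq ltnn.
case/(uniqPn 0) => [i [j [lij ljs E]]].
rewrite size_mkseq in ljs; rewrite !nth_mkseq in E; try lia.
exfalso; apply: (@cyc (j - i) (iter i par v)).
- lia.
- apply: iter_in => // k kd; apply: hp; lia.
- by rewrite -iterD subnK ?E //; lia.
- move=> k kd; rewrite -iterD; apply: hp; lia.
Qed.

Lemma heights : exists h : nat -> nat, forall e, e \in gE G -> h (gt G e) = (h (gs G e)).+1.
Proof.
exists (depth (size (gV G)).+1) => e eE.
have hv : hasp (gt G e) by apply/hasP; exists e.
have -> : depth (size (gV G)).+1 (gt G e) = (depth (size (gV G)) (par (gt G e))).+1 by rewrite /= hv.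
rewrite /par pe_edge //.
case: (endp eE) => sV _; case: (term sV) => m lm hm.
rewrite (depth_stable hm lm) (depth_stable (n:=(size (gV G)).+1) hm) //; lia.
Qed.
End Heights.

Lemma two_count (T : eqType) (P : pred T) s a b : uniq s -> a \in s -> b \in s -> a != b ->
  P a -> P b -> 1 < count P s.
Proof.
move=> us aS bS ab pa pb; rewrite -size_filter.
have sub : {subset [:: a; b] <= filter P s}.
  by move=> x; rewrite !inE => /orP[]/eqP->; rewrite mem_filter ?pa ?pb.
have u2 : uniq [:: a; b] by rewrite /= inE ab.
exact: (uniq_leq_size u2 sub).
Qed.

Lemma inv_init (G : Gr) : input_tree G -> Inv G.
Proof.
move=> [[[[uV uE endp] tot] cnt lab _] [_ conn nocyc indc]].
have indeg : forall e1 e2, e1 \in gE G -> e2 \in gE G -> gt G e1 = gt G e2 -> e1 = e2.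
  move=> e1 e2 e1E e2E E; apply/eqP; apply/negPn/negP => ne.
  have v1 : gt G e1 \in gV G by case: (endp e1 e1E).
  have := indc _ v1; have := two_count (P := fun e => gt G e == gt G e1) uE e1E e2E ne (eqxx _) (introT eqP (esym E)).
  by move=> h1 h2; move: (leq_trans h1 h2); rewrite ltnn.
have : has (fun v => gp G v == Some true) (gV G) by rewrite has_count cnt.
case/hasP => rho rV /eqP rp.
split => //.
exists rho; split => //.
- exact: lab.
- move=> v vV vp; apply/eqP; apply/negPn/negP => ne.
  have := two_count (P := fun v => gp G v == Some true) uV vV rV ne.
  by rewrite vp rp cnt => /(_ (eqxx _) (eqxx _)).
have [h hh] := heights endp indeg nocyc.
exists h; split => //; by move=> v vV; rewrite lab.
Qed.

Lemma lt_max (s : seq nat) x : x \in s -> x < (foldr maxn 0 s).+1.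
Proof.
elim: s => //= y s IH; rewrite inE => /orP [/eqP ->|/IH]; rewrite ltnS ?leq_maxl //.
move=> h; lia.
Qed.

Section A01.
Variables (G : Gr) (a : vlab) (fv fe : nat -> nat).
Let A := apply_rule (Rule (L01 a) K01 R01) G fv fe.

Lemma A01_V x : (x \in gV A) = (x \in gV G) && (x != fv 2).
Proof. by rewrite /A /apply_rule /del_nodes /= cats0 mem_filter inE andbC. Qed.
Lemma A01_E x : (x \in gE A) = (x \in gE G) && (x != fe 1).
Proof. by rewrite /A /apply_rule /del_edges /= cats0 mem_filter inE andbC. Qed.
Lemma A01_st x : x \in gE G -> gs A x = gs G x /\ gt A x = gt G x.
Proof. move=> /lt_max xl; by rewrite /A /apply_rule /= /NE xl. Qed.
Lemma A01_l v : v \in gV G -> gl A v = (if v == fv 1 then Some Sq else gl G v) /\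
   gp A v = (if v == fv 1 then Some true else gp G v).
Proof. move=> /lt_max vl; rewrite /A /apply_rule /= /res_l /res_p /NV vl /kpre /= eq_sym; by case: ifP. Qed.
End A01.

Section A2.
Variables (G : Gr) (fv fe : nat -> nat).
Let A := apply_rule r2 G fv fe.

Lemma A2_V x : (x \in gV A) = (x \in gV G).
Proof. by rewrite /A /apply_rule /del_nodes /= cats0 mem_filter. Qed.
Lemma A2_E x : (x \in gE A) = ((x \in gE G) && (x != fe 1)) || (x == NE G + 1).
Proof. by rewrite /A /apply_rule /del_edges /= mem_cat mem_filter !inE andbC. Qed.
Lemma A2_st x : x \in gE G -> gs A x = gs G x /\ gt A x = gt G x.
Proof. move=> /lt_max xl; by rewrite /A /apply_rule /= /NE xl. Qed.
Lemma A2_stn : gs A (NE G + 1) = fv 1 /\ gt A (NE G + 1) = fv 2.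
Proof. by rewrite /A /apply_rule /= ltnNge leq_addr /= /rnode. Qed.
Lemma A2_l v : v \in gV G -> fv 1 != fv 2 ->
   gl A v = (if v == fv 1 then Some Tri else if v == fv 2 then Some Sq else gl G v) /\
   gp A v = (if v == fv 1 then Some false else if v == fv 2 then Some true else gp G v).
Proof. move=> /lt_max vl ne; rewrite /A /apply_rule /= /res_l /res_p /NV vl /kpre /= !(eq_sym (fv _) v); by case: ifP => _ //; case: ifP. Qed.
End A2.

Lemma step01 (G : Gr) a fv fe : is_tlrg G -> Inv G ->
  is_match (Rule (L01 a) K01 R01) G fv fe -> Inv (apply_rule (Rule (L01 a) K01 R01) G fv fe).
Proof.
move=> _ [endp conn indeg [rho [rV rp rl runiq [h [ha hb hc]]]]].
move=> [[[mV mE ml mp] _ _] dg].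
set A := apply_rule _ G fv fe.
set p := fv 1; set e := fe 1.
have pV : p \in gV G by apply: mV; rewrite !inE.
have r2V : fv 2 \in gV G by apply: mV; rewrite !inE.
case: (mE 1) => //; rewrite -/e => eE se te _.
rewrite /= -/p in se te.
have pl : gl G p = Some a by apply: (ml 1); rewrite ?inE.
have pp : gp G p = Some false by apply: (mp 1); rewrite ?inE.
have r2p : gp G (fv 2) = Some true by apply: (mp 2); rewrite ?inE.
have er : fv 2 = rho by apply: runiq.
rewrite er in te.
have prho : p != rho by apply/eqP => E; move: pp; rewrite E rp.
have dg' : forall e', e' \in gE G -> e' != e -> gs G e' <> rho /\ gt G e' <> rho.
  move=> e' e'E ne; rewrite -er; apply: (dg e' e'E) => //.
  by case=> x; rewrite inE => /eqP -> E; move: ne; rewrite -E eqxx.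
have AV : forall x, (x \in gV A) = (x \in gV G) && (x != rho) by move=> x; rewrite A01_V er.
have AE : forall x, (x \in gE A) = (x \in gE G) && (x != e) by move=> x; rewrite A01_E.
have Ast : forall x, x \in gE G -> gs A x = gs G x /\ gt A x = gt G x by move=> x; apply: A01_st.
have Al : forall v, v \in gV G -> gl A v = (if v == p then Some Sq else gl G v) /\
   gp A v = (if v == p then Some true else gp G v) by move=> v; apply: A01_l.
have chain : forall v, v \in gV G -> gl G v = Some Tri -> v = p \/ h v < h p.
  suff : forall n v, h rho - h v <= n -> v \in gV G -> gl G v = Some Tri -> v = p \/ h v < h p.
    by move=> H v; apply: H.
  elim=> [|n IH] v hn vV vl; first by have := hb v vV vl; lia.
  case: (hc v vV vl) => e' e'E [sv [tl|tr]].
    have tV : gt G e' \in gV G by case: (endp e' e'E).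
    have := hb _ tV tl; have := ha e' e'E; rewrite sv => hx hlt.
    case: (IH (gt G e') _ tV tl); first by lia.
      by move=> E; right; rewrite -E hx.
    by move=> lt; right; lia.
  left; rewrite -sv -se; congr gs; apply: indeg => //; by rewrite tr te.
split.
- move=> x; rewrite AE => /andP [xE xne]; case: (Ast x xE) => -> ->.
  case: (endp x xE) => sV tV; case: (dg' x xE xne) => s1 t1.
  by rewrite !AV sV tV; split; apply/eqP.
-
  suff H : forall u w, uconnected G u w -> w != rho ->
      (u != rho -> uconnected A u w) /\ (u = rho -> uconnected A p w).
    move=> u w; rewrite !AV => /andP [uV ur] /andP [wV wr].
    by case: (H u w (conn u w uV wV) wr) => + _; apply.
  move=> u w; elim=> [x|x y z e' e'E C _ IH] zr.
    by split=> [_|E]; [apply: ucon_refl|move: zr; rewrite E eqxx].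
  case: (IH zr) => IH1 IH2.
  have cases : e' = e \/ (e' != e).
    by case: (e' =P e); [left|right].
  case: cases => [ee|ne].
    subst e'; split.
      move=> xr; case: C => [[s1 t1]|[s1 t1]].
        rewrite se in s1; subst x; apply: IH2; by rewrite -t1 te.
      by move: xr; rewrite -t1 te eqxx.
    move=> xr; case: C => [[s1 t1]|[s1 t1]].
      by move: prho; rewrite -se s1 xr eqxx.
    rewrite se in s1; subst y; apply: IH1; exact: prho.
  case: (dg' e' e'E ne) => s1 t1.
  have e'A : e' \in gE A by rewrite AE e'E.
  case: (Ast e' e'E) => sA tA.
  have yr : y != rho.
    by apply/eqP => E; case: C => [[_ t2]|[s2 _]]; [apply: t1|apply: s1]; rewrite -E.
  split.
    move=> xr; apply: (ucon_step (w := y) (e := e')) => //; last by apply: IH1.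
    by rewrite /connects sA tA.
  move=> xr; exfalso; subst x; case: C => [[s2 _]|[_ t2]]; [apply: s1|apply: t1] => //.
- move=> x y; rewrite !AE => /andP [xE _] /andP [yE _].
  case: (Ast x xE) => _ ->; case: (Ast y yE) => _ ->; exact: indeg.
exists p; split.
- by rewrite AV pV.
- by case: (Al p pV) => _; rewrite eqxx.
- by case: (Al p pV); rewrite eqxx.
- move=> v; rewrite AV => /andP [vV vr]; case: (Al v vV) => _ ->.
  case: ifP => [/eqP //|_ vp]; by move: vr; rewrite (runiq v vV vp) eqxx.
exists h; split.
- move=> x; rewrite AE => /andP [xE _]; case: (Ast x xE) => -> ->; exact: ha.
- move=> v; rewrite AV => /andP [vV _]; case: (Al v vV) => ->.
  case: ifP => // vp _ vl; case: (chain v vV vl) => // E; by move: vp; rewrite E eqxx.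
- move=> v; rewrite AV => /andP [vV _]; case: (Al v vV) => ->.
  case: ifP => // vp _ vl.
  case: (hc v vV vl) => e' e'E [sv tt].
  have ne : e' != e by apply/eqP => E; move: vp; rewrite -sv E se eqxx.
  have tl : gl G (gt G e') = Some Tri.
    case: tt => // tr; by move/eqP: ne; case; apply: indeg => //; rewrite tr te.
  exists e'; first by rewrite AE e'E.
  case: (Ast e' e'E) => -> ->; split => //.
  have tV : gt G e' \in gV G by case: (endp e' e'E).
  case: (Al _ tV) => -> _; case: ifP => [/eqP ->|_]; [by right|by left].
Qed.

Lemma step2 (G : Gr) fv fe : is_tlrg G -> Inv G ->
  is_match r2 G fv fe -> Inv (apply_rule r2 G fv fe).
Proof.
move=> _ [endp conn indeg [rho [rV rp rl runiq [h [ha hb hc]]]]].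
move=> [[[mV mE ml mp] _ _] _].
set A := apply_rule _ G fv fe.
set c := fv 2; set e := fe 1; set n := NE G + 1.
have r1V : fv 1 \in gV G by apply: mV; rewrite !inE.
have cV : c \in gV G by apply: mV; rewrite !inE.
case: (mE 1) => //; rewrite -/e => eE se te _.
rewrite /= -/c in se te.
have cl : gl G c = Some Sq by apply: (ml 2); rewrite ?inE.
have cp : gp G c = Some false by apply: (mp 2); rewrite ?inE.
have r1p : gp G (fv 1) = Some true by apply: (mp 1); rewrite ?inE.
have er : fv 1 = rho by apply: runiq.
have ne : fv 1 != fv 2 by apply/eqP => E; move: r1p; rewrite E -/c cp.
have crho : c != rho by rewrite -er eq_sym.
rewrite er in se.
have AV : forall x, (x \in gV A) = (x \in gV G) by move=> x; rewrite A2_V.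
have AE : forall x, (x \in gE A) = ((x \in gE G) && (x != e)) || (x == n) by move=> x; rewrite A2_E.
have Ast : forall x, x \in gE G -> gs A x = gs G x /\ gt A x = gt G x by move=> x; apply: A2_st.
have [Asn Atn] : gs A n = rho /\ gt A n = c by rewrite -er; apply: A2_stn.
have Al : forall v, v \in gV G ->
   gl A v = (if v == rho then Some Tri else if v == c then Some Sq else gl G v) /\
   gp A v = (if v == rho then Some false else if v == c then Some true else gp G v).
  by move=> v vV; rewrite -er; apply: A2_l.
have nE : forall x, x \in gE G -> x != n.
  move=> x /lt_max; rewrite -/(NE G) /n => lt; apply/eqP => E; move: lt; rewrite E; lia.
have hce : h c = (h rho).+1 by rewrite -te ha // se.
split.
- move=> x; rewrite AE => /orP [/andP [xE _]|/eqP ->].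
    by case: (Ast x xE) => -> ->; rewrite !AV; apply: endp.
  by rewrite Asn Atn !AV.
- move=> u w; rewrite !AV => uV wV.
  elim: (conn u w uV wV) => [x|x y z e' e'E C _ IH]; first exact: ucon_refl.
  case: (e' =P e) => [ee|ne'].
    subst e'; apply: (ucon_step (w := y) (e := n)) => //; first by rewrite AE eqxx orbT.
    by rewrite /connects Asn Atn -se -te.
  apply: (ucon_step (w := y) (e := e')) => //; first by rewrite AE e'E; apply/orP; left; apply/eqP.
  by case: (Ast e' e'E) => sA tA; rewrite /connects sA tA.
- move=> x y; rewrite !AE => /orP [/andP [xE xe]|/eqP ->] /orP [/andP [yE ye]|/eqP ->] //.
  + by case: (Ast x xE) => _ ->; case: (Ast y yE) => _ ->; exact: indeg.
  + case: (Ast x xE) => _ ->; rewrite Atn -te => E; move: xe; rewrite (indeg x e) ?eqxx //.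
  + case: (Ast y yE) => _ ->; rewrite Atn -te => E; move: ye; rewrite (indeg y e) ?eqxx //.
exists c; split.
- by rewrite AV.
- by case: (Al c cV) => _; rewrite (negbTE crho) eqxx.
- by case: (Al c cV); rewrite (negbTE crho) eqxx.
- move=> v; rewrite AV => vV; case: (Al v vV) => _ ->.
  case: ifP => // vr; case: ifP => [/eqP //|_ vp].
  by move: vr; rewrite (runiq v vV vp) eqxx.
exists h; split.
- move=> x; rewrite AE => /orP [/andP [xE _]|/eqP ->].
    by case: (Ast x xE) => -> ->; exact: ha.
  by rewrite Asn Atn.
- move=> v; rewrite AV => vV; case: (Al v vV) => -> _.
  case: ifP => [/eqP -> _|_]; first by rewrite hce.
  case: ifP => // _ vl; have := hb v vV vl; rewrite hce; lia.
- move=> v; rewrite AV => vV; case: (Al v vV) => -> _.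
  case: ifP => [/eqP -> _|vr].
    by exists n; [rewrite AE eqxx orbT | rewrite Asn Atn; split => //; right].
  case: ifP => // _ vl.
  case: (hc v vV vl) => e' e'E [sv tt].
  have ne' : e' != e by apply/eqP => E; move: vr; rewrite -sv E se eqxx.
  exists e'; first by rewrite AE e'E ne'.
  case: (Ast e' e'E) => -> ->; split => //; left.
  have tV : gt G e' \in gV G by case: (endp e' e'E).
  case: (Al _ tV) => -> _.
  case: ifP => // tr0; case: ifP => [/eqP E|_].
    by case: tt => [|tr]; [rewrite E cl | move: crho; rewrite -tr -E eqxx].
  case: tt => // tr; by move: tr0; rewrite tr eqxx.
Qed.

Lemma step (G H : Gr) : Inv G -> dderives rules012 G H -> Inv H.
Proof.
move=> I [r [fv [fe [R tl M _ Is]]]]; apply: (inv_iso _ Is).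
by case: R => [E|[E|E]]; subst r; [apply: step01 | apply: step01 | apply: step2].
Qed.

Lemma inv_derives (G H : Gr) : derives rules012 G H -> Inv G -> Inv H.
Proof. by elim=> // X Y Z D _ IH I; apply: IH; apply: step D. Qed.

Unset Implicit Arguments.

Theorem lemma4p9 (G H : Gr) :
  input_tree G -> is_tlrg H -> derives rules012 G H ->
  size (gV H) = 1 \/ applicable rules012 H.
Proof.
move=> IT tH D; apply: final => //; apply: (inv_derives D); exact: inv_init.
Qed.
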